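(* Let $Q\in\mathbb{Z}[x_1,\dots,x_n]$ be a positive definite form of degree $k\ge2$ with Birch rank $\mathcal{B}(Q)>(k-1)2^k$, and let $\mathfrak{p}$ be a prime. For each $J\in\mathbb{N}$ there is $R_0(J)>0$ such that for every $\mathbf{b}\in(\mathbb{Z}/\mathfrak{p}^J\mathbb{Z})^n$ and every $R>R_0(J)$ there exists an integer $\lambda=\lambda(\mathbf{b})\in[R,2R)$ with \[ \#\{x\in\mathbb{Z}^n:\ Q(x)=\lambda,\ x\equiv\mathbf{b}\ (\mathrm{mod}\ \mathfrak{p}^J)\}\ \gtrsim\ \mathfrak{p}^{-J(n-1)}\lambda^{n/k-1}, \] where the implied constant depends only on $Q$ (not on $J$, $\mathbf{b}$, $R$).
   Context: The Birch rank $\mathcal{B}(Q)$ is the codimension in $\mathbb{C}^n$ of $\{z\in\mathbb{C}^n:\nabla Q(z)=0\}$. *)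

(* Defs.v *)
From HB Require Import structures.
From mathcomp Require Import all_boot all_order all_algebra all_field.
From Stdlib Require Import Reals ZArith List.
Set Implicit Arguments. Unset Strict Implicit. Unset Printing Implicit Defensive.

(* A polynomial in n variables with coefficients in B is represented as a finite
   list of monomials (coefficient, exponent vector); it denotes the sum of the
   monomials.  [meval] evaluates it in any "ring-like" carrier A given its
   operations. *)
Definition mpoly (n : nat) (B : Type) := list (B * ('I_n -> nat))%type.

Definition meval {n : nat} {A B : Type} (add mul : A -> A -> A) (zero one : A)
  (pw : A -> nat -> A) (c : B -> A) (f : mpoly n B) (x : 'I_n -> A) : A :=
  \big[add/zero]_(m <- f) mul (c m.1) (\big[mul/one]_(i < n) pw (x i) (m.2 i)).

Definition evalZ {n} (Q : mpoly n Z) (x : 'I_n -> Z) : Z :=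
  meval Z.add Z.mul 0%Z 1%Z (fun a e => Z.pow a (Z.of_nat e)) (fun z : Z => z) Q x.

Definition evalR {n} (Q : mpoly n Z) (x : 'I_n -> R) : R :=
  meval Rplus Rmult R0 R1 pow IZR Q x.

Section AlgC.
Local Open Scope ring_scope.
Definition ZtoC (z : Z) : algC := (Z.to_nat z)%:R - (Z.to_nat (Z.opp z))%:R.

Definition evalC {n} {B} (c : B -> algC) (f : mpoly n B) (x : 'I_n -> algC) : algC :=
  meval (@GRing.add algC) (@GRing.mul algC) 0 1 (@GRing.exp algC) c f x.
Definition czero : algC := 0.
End AlgC.

Definition is_form {n} (k : nat) (Q : mpoly n Z) : bool :=
  all (fun m => eqn (\big[addn/0%nat]_(i < n) m.2 i) k) Q.

Definition pos_def {n} (Q : mpoly n Z) : Prop :=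
  forall x : 'I_n -> R, (exists i, x i <> R0) -> Rlt R0 (evalR Q x).

Definition dpoly {n} (i : 'I_n) (Q : mpoly n Z) : mpoly n Z :=
  map (fun m => (Z.mul m.1 (Z.of_nat (m.2 i)),
                 fun j => if j == i then (m.2 j).-1 else m.2 j)) Q.

Definition cset (n : nat) := ('I_n -> algC) -> Prop.

Definition sing_locus {n} (Q : mpoly n Z) : cset n :=
  fun z => forall i : 'I_n, evalC ZtoC (dpoly i Q) z = czero.

Definition zclosed {n} (V : cset n) : Prop :=
  exists F : mpoly n algC -> Prop,
    forall z, V z <-> (forall f, F f -> evalC (fun c : algC => c) f z = czero).

Definition csubset {n} (U V : cset n) : Prop := forall z, U z -> V z.

Definition irreducible_closed {n} (V : cset n) : Prop :=
  zclosed V /\ (exists z, V z) /\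
  forall U W : cset n, zclosed U -> zclosed W ->
    (forall z, V z <-> (U z \/ W z)) -> csubset V U \/ csubset V W.

Definition irr_chain {n} (V : cset n) (d : nat) : Prop :=
  exists Zs : nat -> cset n,
    (forall i, leq i d -> irreducible_closed (Zs i) /\ csubset (Zs i) V) /\
    (forall i, leq i.+1 d -> csubset (Zs i) (Zs i.+1) /\
                            exists z, Zs i.+1 z /\ ~ Zs i z).

Definition zdim {n} (V : cset n) (d : nat) : Prop :=
  irr_chain V d /\ forall d', irr_chain V d' -> leq d' d.

Definition birch_rank {n} (Q : mpoly n Z) (r : nat) : Prop :=
  exists d, zdim (sing_locus Q) d /\ r = subn n d.

(* Main.v *)
Require Import Defs.
From mathcomp Require Import all_boot all_order all_algebra all_field.
From Stdlib Require Import Reals ZArith List.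
From Stdlib Require Import Lra Lia Psatz.
From mathcomp Require Import zify.
Set Implicit Arguments. Unset Strict Implicit.
Local Open Scope R_scope.

Lemma mul_err (a1 b1 a2 b2 s1 t1 s2 t2 : R) :
  Rabs b1 <= s1 -> Rabs (a1 - b1) <= t1 - s1 ->
  Rabs b2 <= s2 -> Rabs (a2 - b2) <= t2 - s2 ->
  Rabs (a1 * a2 - b1 * b2) <= t1 * t2 - s1 * s2 /\ Rabs (b1 * b2) <= s1 * s2.
Proof.
move=> h1 h2 h3 h4.
have e : a1 * a2 - b1 * b2 = (a1 - b1) * a2 + b1 * (a2 - b2) by ring.
have ha2 : Rabs a2 <= t2.
  have : Rabs a2 <= Rabs b2 + Rabs (a2 - b2).
    have -> : a2 = b2 + (a2 - b2) by ring.
    have -> : b2 + (a2 - b2) - b2 = a2 - b2 by ring.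
    apply Rabs_triang.
  lra.
have p1 : 0 <= Rabs b1 by apply Rabs_pos.
have p2 : 0 <= Rabs (a2 - b2) by apply Rabs_pos.
have p3 : 0 <= Rabs (a1 - b1) by apply Rabs_pos.
have p4 : 0 <= Rabs a2 by apply Rabs_pos.
split; last by rewrite Rabs_mult; apply Rmult_le_compat; try lra; apply Rabs_pos.
rewrite e; apply: Rle_trans; first apply Rabs_triang.
rewrite !Rabs_mult.
have : Rabs (a1 - b1) * Rabs a2 <= (t1 - s1) * t2 by apply Rmult_le_compat.
have : Rabs b1 * Rabs (a2 - b2) <= s1 * (t2 - s2) by apply Rmult_le_compat.
lra.
Qed.

Lemma pow_err (a b U W : R) m : 0 <= U -> 0 <= W -> Rabs b <= U -> Rabs (a - b) <= W ->
  Rabs (a ^ m - b ^ m) <= (U + W) ^ m - U ^ m /\ Rabs (b ^ m) <= U ^ m.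
Proof.
move=> hU hW hb hab; elim: m => [|m [IH1 IH2]] /=.
  rewrite Rminus_diag Rabs_R0 Rabs_R1; lra.
apply mul_err => //; lra.
Qed.

Lemma prod_err (I : Type) (r : list I) (e : I -> nat) (a b : I -> R) (U W : R) :
  0 <= U -> 0 <= W -> (forall i, Rabs (b i) <= U) -> (forall i, Rabs (a i - b i) <= W) ->
  Rabs (\big[Rmult/R1]_(i <- r) (a i ^ e i) - \big[Rmult/R1]_(i <- r) (b i ^ e i))
    <= (U + W) ^ (\big[addn/0%nat]_(i <- r) e i) - U ^ (\big[addn/0%nat]_(i <- r) e i)
  /\ Rabs (\big[Rmult/R1]_(i <- r) (b i ^ e i)) <= U ^ (\big[addn/0%nat]_(i <- r) e i).
Proof.
move=> hU hW hb hab; elim: r => [|i r [IH1 IH2]].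
  rewrite !big_nil /= Rminus_diag Rabs_R0 Rabs_R1; lra.
rewrite !big_cons !pow_add.
have [h1 h2] := pow_err (e i) hU hW (hb i) (hab i).
by apply mul_err.
Qed.

Lemma prod_hom (I : Type) (r : list I) (e : I -> nat) (v : I -> R) (s : R) :
  \big[Rmult/R1]_(i <- r) ((s * v i) ^ e i) =
  s ^ (\big[addn/0%nat]_(i <- r) e i) * \big[Rmult/R1]_(i <- r) (v i ^ e i).
Proof.
elim: r => [|i r IH]; first by rewrite !big_nil /=; ring.
by rewrite !big_cons IH pow_add Rpow_mult_distr; ring.
Qed.

Definition absQ {n} (Q : mpoly n Z) : R := \big[Rplus/R0]_(m <- Q) Rabs (IZR m.1).

Lemma evalR_err n k (Q : mpoly n Z) (x u : 'I_n -> R) U W :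
  is_form k Q -> 0 <= U -> 0 <= W -> (forall i, Rabs (u i) <= U) -> (forall i, Rabs (x i - u i) <= W) ->
  Rabs (evalR Q x - evalR Q u) <= absQ Q * ((U + W) ^ k - U ^ k).
Proof.
move=> hf hU hW hu hx; rewrite /evalR /meval /absQ.
have hD : 0 <= (U + W) ^ k - U ^ k.
  have := pow_err k hU hW (b:=U) (a:=U+W).
  rewrite Rabs_pos_eq // Rabs_pos_eq; last lra.
  have -> : U + W - U = W by ring.
  move=> /(_ (Rle_refl _) (Rle_refl _)) [h _]; apply: Rle_trans h; apply Rabs_pos.
elim: Q hf => [|m Q IH] hf.
  rewrite !big_nil Rminus_diag Rabs_R0; lra.
move: hf; rewrite /is_form /= => /andP [hm hf].
rewrite !big_cons.
have [h1 _] := prod_err (index_enum (ordinal n)) (fun i => m.2 i) hU hW hu hx.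
move/eqP: hm => hm. rewrite hm in h1.
set P1 := \big[Rmult/R1]_(i < n) _ in h1 *.
set P2 := \big[Rmult/R1]_(i < n) _ in h1 *.
have := IH hf.
set S1 := \big[Rplus/R0]_(j <- Q) _.
set S2 := \big[Rplus/R0]_(j <- Q) _.
set S3 := \big[Rplus/R0]_(j <- Q) _.
move=> IH'.
have e : IZR m.1 * P1 + S1 - (IZR m.1 * P2 + S2) = IZR m.1 * (P1 - P2) + (S1 - S2) by ring.
rewrite e; apply: Rle_trans; first apply Rabs_triang.
rewrite Rabs_mult Rmult_plus_distr_r.
have : Rabs (IZR m.1) * Rabs (P1 - P2) <= Rabs (IZR m.1) * ((U + W) ^ k - U ^ k).
  apply Rmult_le_compat_l => //; apply Rabs_pos.
lra.
Qed.

Lemma evalR_hom n k (Q : mpoly n Z) (v : 'I_n -> R) s :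
  is_form k Q -> evalR Q (fun i => s * v i) = s ^ k * evalR Q v.
Proof.
rewrite /evalR /meval; elim: Q => [|m Q IH]; first by rewrite !big_nil => _; ring.
rewrite /is_form /= => /andP [/eqP hm hf].
rewrite !big_cons IH // (prod_hom (index_enum (ordinal n)) (fun i => m.2 i) v s) hm.
by rewrite [in RHS]Rmult_plus_distr_l -!Rmult_assoc (Rmult_comm (IZR m.1)).
Qed.

Lemma evalR_IZR n (Q : mpoly n Z) (x : 'I_n -> Z) :
  evalR Q (fun i => IZR (x i)) = IZR (evalZ Q x).
Proof.
rewrite /evalR /evalZ /meval; elim: Q => [|m Q IH]; first by rewrite !big_nil.
rewrite !big_cons IH plus_IZR mult_IZR; congr (_ * _ + _).
elim: (index_enum _) => [|i r IH']; first by rewrite !big_nil.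
by rewrite !big_cons IH' mult_IZR pow_IZR.
Qed.

Lemma evalZ_cong n (Q : mpoly n Z) (x b : 'I_n -> Z) (q : Z) :
  (forall i, Z.divide q (x i - b i)%Z) -> Z.divide q (evalZ Q x - evalZ Q b)%Z.
Proof.
move=> h; rewrite /evalZ /meval.
apply: (big_ind2 (fun a c => Z.divide q (a - c)%Z)).
- by exists 0%Z; ring.
- move=> x1 x2 y1 y2 [u1 e1] [u2 e2]; exists (u1 + u2)%Z; lia.
move=> m _.
suff [u hu] : Z.divide q (\big[Z.mul/1%Z]_(i < n) (x i ^ Z.of_nat (m.2 i)) - \big[Z.mul/1%Z]_(i < n) (b i ^ Z.of_nat (m.2 i)))%Z.
  exists (m.1 * u)%Z; rewrite -Z.mul_sub_distr_l hu; ring.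
apply: (big_ind2 (fun a c => Z.divide q (a - c)%Z)).
- by exists 0%Z; ring.
- move=> x1 x2 y1 y2 [u1 e1] [u2 e2]. exists (u1 * y1 + x2 * u2)%Z.
  have -> : (x1 * y1 - x2 * y2 = (x1 - x2) * y1 + x2 * (y1 - y2))%Z by ring.
  rewrite e1 e2; ring.
move=> i _.
elim: (m.2 i) => [|e IH]; first by exists 0%Z.
rewrite Nat2Z.inj_succ !Z.pow_succ_r; try lia.
case: IH => [u1 e1]; case: (h i) => [u2 e2].
exists (u1 * x i + b i ^ Z.of_nat e * u2)%Z.
have -> : (x i * x i ^ Z.of_nat e - b i * b i ^ Z.of_nat e =
   (x i ^ Z.of_nat e - b i ^ Z.of_nat e) * x i + b i ^ Z.of_nat e * (x i - b i))%Z by ring.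
rewrite e1 e2; ring.
Qed.

Lemma filter_all_id (X : Type) (f : X -> bool) (S : list X) :
  (forall x, In x S -> f x = true) -> filter f S = S.
Proof.
elim: S => [|a S IH] h //=; rewrite h /=; last by left.
by rewrite IH // => x hx; apply h; right.
Qed.

Lemma filter_filter_len (X : Type) (f g : X -> bool) (S : list X) :
  (forall x, f x = true -> g x = true) ->
  length (filter f (filter g S)) = length (filter f S).
Proof.
move=> h; elim: S => [|a S IH] //=.
case eg: (g a) => /=.
  by case: (f a) => /=; rewrite IH.
case ef: (f a) => //=; first by rewrite (h _ ef) in eg.
Qed.

Lemma pigeon (X : Type) (h : X -> nat) (M : nat) (l : list X) :
  (forall x, In x l -> (h x <= M)%coq_nat) ->
  exists j, (j <= M)%coq_nat /\
    (length l <= S M * length (filter (fun x => Nat.eqb (h x) j) l))%coq_nat.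
Proof.
elim: M l => [|M IH] l hS.
  exists 0%nat; split => //.
  rewrite filter_all_id; first by simpl; lia.
  move=> x /hS hx; apply/Nat.eqb_eq; lia.
set f := fun x => Nat.eqb (h x) (S M).
have hl := filter_length f l.
case: (Nat.le_gt_cases (length l) (S (S M) * length (filter f l))) => hc.
  by exists (S M); split => //; lia.
have hS2 : forall x, In x (filter (fun x => ~~ f x) l) -> (h x <= M)%coq_nat.
  move=> x /filter_In [/hS hx hf]; rewrite /f in hf.
  case e: (Nat.eqb (h x) (S M)) hf => // _.
  move/Nat.eqb_neq: e; lia.
have [j [hj hlen]] := IH _ hS2.
exists j; split; first lia.
rewrite filter_filter_len in hlen; last first.
  move=> x /Nat.eqb_eq hx; rewrite /f hx; apply/negP => /Nat.eqb_eq; lia.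
nia.
Qed.

Lemma uniq_NoDup (T : eqType) (s : list T) : uniq s -> NoDup s.
Proof.
elim: s => [|a s IH] /=; first by constructor.
move=> /andP [ha hs]; constructor; last by apply IH.
move=> hin; move/negP: ha; apply.
elim: s hin {IH hs} => [|b s IH'] //= [->|h]; rewrite inE ?eqxx //.
by rewrite IH' ?orbT.
Qed.

Lemma pow_diff_le (U W : R) m : 0 <= U -> 0 <= W ->
  (U + W) ^ (S m) - U ^ (S m) <= INR (S m) * W * (U + W) ^ m.
Proof.
move=> hU hW; elim: m => [|m IH]; first by rewrite /=; lra.
have h1 : U ^ S m <= (U + W) ^ S m by apply pow_incr; lra.
have e : (U + W) ^ S (S m) - U ^ S (S m) = (U + W) * ((U + W) ^ S m - U ^ S m) + W * U ^ S m.
  by rewrite /=; ring.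
rewrite e S_INR.
have h2 : (U + W) * ((U + W) ^ S m - U ^ S m) <= (U + W) * (INR (S m) * W * (U + W) ^ m).
  apply Rmult_le_compat_l; lra.
have h3 : W * U ^ S m <= W * (U + W) ^ S m by apply Rmult_le_compat_l.
have -> : (INR (S m) + 1) * W * (U + W) ^ S m = (U + W) * (INR (S m) * W * (U + W) ^ m) + W * (U + W) ^ S m.
  by rewrite /=; ring.
lra.
Qed.

Lemma INR_expn (L n : nat) : INR (expn L n) = INR L ^ n.
Proof. elim: n => [|n IH] //=. by rewrite expnS mult_INR IH. Qed.

Lemma size_length (T : Type) (s : list T) : size s = length s.
Proof. by elim: s => //= a s ->. Qed.

Lemma Int_part_ge (m : Z) (y : R) : IZR m <= y -> (m <= Int_part y)%Z.
Proof.
move=> h; have [h1 h2] := base_Int_part y.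
have : IZR m < IZR (Int_part y) + 1 by lra.
rewrite -plus_IZR => /lt_IZR; lia.
Qed.

Theorem mainTheorem3 (n k : nat) (Q : mpoly n Z) :
  leq 2 k -> is_form k Q -> pos_def Q ->
  (exists r, birch_rank Q r /\ leq (muln (subn k 1) (expn 2 k)).+1 r) ->
  exists C : R, Rlt R0 C /\
  forall p : nat, prime p -> forall J : nat,
  exists R0' : R, Rlt R0 R0' /\
  forall (b : 'I_n -> Z) (Rr : R), Rlt R0' Rr ->
  exists lam : Z, Rle Rr (IZR lam) /\ Rlt (IZR lam) (Rmult 2 Rr) /\
    exists l : list ('I_n -> Z), NoDup l /\
      (forall x, In x l ->
         evalZ Q x = lam /\
         forall i : 'I_n, Z.modulo (Z.sub (x i) (b i)) (Z.pow (Z.of_nat p) (Z.of_nat J)) = 0%Z) /\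
      Rle (Rmult C (Rmult (Rpower (INR p) (Ropp (Rmult (INR J) (Rminus (INR n) 1))))
                          (Rpower (IZR lam) (Rminus (Rdiv (INR n) (INR k)) 1))))
          (INR (length l)).
Proof.
move=> hk hf hpd [r [[d [_ hr]] hrk]].
have hkn : (k < n)%coq_nat.
  have h2k : leq k.+1 (expn 2 k) by apply: ltn_expl.
  move: h2k hrk; rewrite hr; set X := expn 2 k => h2k hrk. nia.
have hn0 : leq 1 n by lia.
set i0 : 'I_n := Ordinal hn0.
set e0 : 'I_n -> R := fun i => if i == i0 then 1 else 0.
set c := evalR Q e0.
have hc : 0 < c.
  apply hpd; exists i0; rewrite /e0 eqxx; lra.
set A := absQ Q.
have hA : 0 <= A.
  rewrite /A /absQ; elim: (Q) => [|m Q' IH]; rewrite ?big_nil ?big_cons; first lra.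
  have := Rabs_pos (IZR m.1); lra.
have hkR : 2 <= INR k by apply (le_INR 2 k); lia.
set K0 := (4 * A * INR k * 2 ^ (k - 1) + 1) / c + 1.
have hK0 : 1 <= K0.
  have : 0 <= (4 * A * INR k * 2 ^ (k - 1) + 1) / c.
    apply Rle_mult_inv_pos; last by []. have h2 := pow_le 2 (k - 1) ltac:(lra). have := Rmult_le_pos _ _ (Rmult_le_pos _ _ (Rmult_le_pos 4 A ltac:(lra) hA) (pos_INR k)) h2. lra.
  rewrite /K0; lra.
have hcK0 : 4 * A * INR k * 2 ^ (k - 1) <= c * K0.
  have e : c * K0 = 4 * A * INR k * 2 ^ (k - 1) + 1 + c by rewrite /K0; field; lra.
  lra.
set a := INR n / INR k.
have ha : 1 <= a.
  rewrite /a; apply (Rmult_le_reg_r (INR k)); first lra.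
  rewrite /Rdiv Rmult_assoc Rinv_l; last lra.
  rewrite Rmult_1_l Rmult_1_r; apply le_INR; lia.
set C := Rpower (3 / (2 * c)) a / ((2 * K0) ^ n * 4 * Rpower 2 a).
exists C; split.
  rewrite /C /Rdiv; apply Rmult_lt_0_compat; first by apply exp_pos.
  apply Rinv_0_lt_compat; apply Rmult_lt_0_compat; last by apply exp_pos.
  apply Rmult_lt_0_compat; last lra; apply pow_lt; lra.
move=> p hp J.
have hp2 : (2 <= p)%coq_nat by have := prime_gt1 hp; lia.
set q := Z.pow (Z.of_nat p) (Z.of_nat J).
have hqR : IZR q = INR p ^ J by rewrite /q -pow_IZR -INR_IZR_INZ.
have hq1 : 1 <= IZR q.
  rewrite hqR; apply pow_R1_Rle; apply (le_INR 1 p); lia.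
have hq1Z : (1 <= q)%Z by apply le_IZR.
set qR := IZR q.
have hqR1 : 1 <= qR by [].
set R0' := c * (2 * qR * K0) ^ k + qR + 1.
have hcpow : 0 <= c * (2 * qR * K0) ^ k.
  apply Rmult_le_pos; first lra. apply pow_le. have hq1' : 1 <= qR by []. nra.
exists R0'; split; first by rewrite /R0'; lra.
move=> b Rr hR.
have hRr : qR + 1 < Rr by rewrite /R0' in hR; lra.
set X := 3 * Rr / (2 * c).
have hX : 0 < X by rewrite /X; apply Rdiv_lt_0_compat; lra.
set T := Rpower X (/ INR k).
have hT0 : 0 < T by apply exp_pos.
have hTk : T ^ k = X.
  rewrite /T -Rpower_pow // Rpower_mult Rinv_l; last lra.
  by rewrite Rpower_1.
have hTq : 2 * qR * K0 <= T.
  have h1 : (2 * qR * K0) ^ k <= X.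
    rewrite /X; apply (Rmult_le_reg_l c) => //.
    have -> : c * (3 * Rr / (2 * c)) = 3 * Rr / 2 by field; lra.
    rewrite /R0' in hR; lra.
  have h0 : 0 < 2 * qR * K0 by nra.
  have := Rle_Rpower_l _ _ (/ INR k) ltac:(apply Rlt_le; apply Rinv_0_lt_compat; lra) (conj (pow_lt _ k h0) h1).
  rewrite -/T -Rpower_pow // Rpower_mult Rinv_r; last lra.
  by rewrite Rpower_1.
set z := T / (K0 * qR).
have hz : 2 <= z.
  rewrite /z; apply (Rmult_le_reg_r (K0 * qR)); first nra.
  rewrite /Rdiv Rmult_assoc Rinv_l; nra.
have [hLz1 hLz2] := base_Int_part z.
set Lz := Int_part z in hLz1 hLz2 *.
have hLz0 : (1 <= Lz)%Z by apply Int_part_ge; simpl; lra.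
set L := Z.to_nat Lz.
have hLR : INR L = IZR Lz by rewrite /L INR_IZR_INZ Z2Nat.id //; lia.
have hL1 : 1 <= INR L by rewrite hLR; apply (IZR_le 1).
have hLz : INR L <= z by rewrite hLR.
have hLz' : z / 2 <= INR L by rewrite hLR; lra.
set W := qR * INR L.
have hW0 : 0 <= W by rewrite /W; nra.
have hWK : W * K0 <= T.
  have : qR * z * K0 = T by rewrite /z; field; split; lra.
  rewrite /W. have : 0 <= qR * K0 by nra. nra.
have hWT : W <= T by nra.
set t : 'I_n -> Z := fun i => if i == i0 then Int_part T else 0%Z.
set rr : 'I_n -> Z := fun i => Z.modulo (b i - t i) q.
have hrr : forall i, (0 <= rr i < q)%Z by move=> i; apply Z.mod_pos_bound; lia.
have hrrR : forall i, 0 <= IZR (rr i) <= qR - 1.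
  move=> i; have [h1 h2] := hrr i; split; first by apply (IZR_le 0).
  rewrite /qR -(minus_IZR q 1); apply IZR_le; lia.
set F : {ffun 'I_n -> 'I_L} -> ('I_n -> Z) :=
  fun j i => (t i + rr i + q * Z.of_nat (j i))%Z.
have hFdiv : forall j i, ((F j i - b i) mod q = 0)%Z.
  move=> j i; rewrite /F /rr.
  have e := Z.div_mod (b i - t i) q ltac:(lia).
  have -> : (t i + (b i - t i) mod q + q * Z.of_nat (j i) - b i =
     (Z.of_nat (j i) - (b i - t i) / q) * q)%Z by lia.
  by apply Z.mod_mul; lia.
have hFR : forall j i, IZR (F j i) = IZR (t i) + IZR (rr i) + qR * INR (j i).
  by move=> j i; rewrite /F !plus_IZR mult_IZR -INR_IZR_INZ.
have hjL : forall (j : {ffun 'I_n -> 'I_L}) i, 0 <= INR (j i) <= INR L - 1.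
  move=> j i; split; first by apply pos_INR.
  have : leq (j i).+1 L by apply ltn_ord.
  move=> h; have : INR (S (j i)) <= INR L by apply le_INR; lia.
  rewrite S_INR; lra.
have [hT1 hT2] := base_Int_part T.
have hdist : forall j i, Rabs (IZR (F j i) - T * e0 i) <= W.
  move=> j i; rewrite hFR /t /e0; have h2 := hrrR i; have h1 := hjL j i.
  have h3 : qR * INR (j i) <= qR * (INR L - 1) by apply Rmult_le_compat_l; lra.
  rewrite /W; case: (i == i0) => /=; apply Rabs_le; nra.
have hu : forall i, Rabs (T * e0 i) <= T.
  move=> i; rewrite /e0; case: (i == i0); rewrite Rabs_pos_eq; lra.
have hQu : evalR Q (fun i => T * e0 i) = 3 * Rr / 2.
  rewrite (evalR_hom e0 T hf) hTk -/c /X; field; lra.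
have hpt : forall j, 9 / 8 * Rr <= IZR (evalZ Q (F j)) <= 15 / 8 * Rr.
  move=> j.
  have herr := evalR_err (x:=fun i => IZR (F j i)) (u:=fun i => T * e0 i) hf (Rlt_le _ _ hT0) hW0 hu (hdist j).
  rewrite evalR_IZR hQu -/A in herr.
  have hk1 : k = S (k - 1) by lia.
  have hd := pow_diff_le (k - 1) (Rlt_le _ _ hT0) hW0.
  rewrite -hk1 in hd.
  have hp1 : (T + W) ^ (k - 1) <= 2 ^ (k - 1) * T ^ (k - 1).
    rewrite -Rpow_mult_distr; apply pow_incr; lra.
  have hTk' : T ^ k = T ^ (k - 1) * T by rewrite {1}hk1 /=; ring.
  have hTp : 0 <= T ^ (k - 1) by apply pow_le; lra.
  set E := A * INR k * 2 ^ (k - 1).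
  have hE : 0 <= E by apply Rmult_le_pos; [apply Rmult_le_pos => //; apply pos_INR | apply pow_le; lra].
  have h1 : A * ((T + W) ^ k - T ^ k) <= E * W * T ^ (k - 1).
    have h2 : A * ((T + W) ^ k - T ^ k) <= A * (INR k * W * (2 ^ (k - 1) * T ^ (k - 1))).
      apply Rmult_le_compat_l => //; apply: Rle_trans hd _.
      apply Rmult_le_compat_l; first by apply Rmult_le_pos => //; apply pos_INR.
      exact hp1.
    have -> : E * W * T ^ (k - 1) = A * (INR k * W * (2 ^ (k - 1) * T ^ (k - 1))) by rewrite /E; ring.
    exact h2.
  have h3 : E * W * T ^ (k - 1) <= c * T ^ k / 4.
    apply (Rmult_le_reg_r K0); first lra.
    have h4 : E * W * T ^ (k - 1) * K0 <= E * T ^ k.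
      rewrite hTk'. have h8 : 0 <= E * T ^ (k - 1) by apply Rmult_le_pos.
      have -> : E * W * T ^ (k - 1) * K0 = E * T ^ (k - 1) * (W * K0) by ring.
      have -> : E * (T ^ (k - 1) * T) = E * T ^ (k - 1) * T by ring.
      by apply Rmult_le_compat_l.
    have h5 : 4 * E <= c * K0 by rewrite /E -!Rmult_assoc.
    have h6 : 0 <= T ^ k by rewrite hTk'; apply Rmult_le_pos; lra.
    have h9 : 4 * E * T ^ k <= c * K0 * T ^ k by apply Rmult_le_compat_r.
    have -> : c * T ^ k / 4 * K0 = c * K0 * T ^ k / 4 by field.
    lra.
  have h7 : c * T ^ k / 4 = 3 * Rr / 8 by rewrite hTk /X; field; lra.
  set dd := IZR (evalZ Q (F j)) - 3 * Rr / 2 in herr.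
  have hb1 := Rle_abs dd; have hb2 := Rle_abs (- dd); rewrite Rabs_Ropp in hb2.
  have hdd : dd = IZR (evalZ Q (F j)) - 3 * Rr / 2 by []. clearbody dd. split; lra.
set Spts := map F (enum {ffun 'I_n -> 'I_L}).
have hlenS : length Spts = expn L n.
  rewrite /Spts length_map -size_length -cardE card_ffun !card_ord //.
have hinS : forall x, In x Spts -> exists j, x = F j.
  by move=> x /in_map_iff [j [<- _]]; exists j.
have hNoS : NoDup Spts.
  apply NoDup_map_NoDup_ForallPairs; last by apply uniq_NoDup; exact: enum_uniq.
  move=> j1 j2 _ _ e; apply/ffunP => i; apply val_inj.
  have := f_equal (fun f => f i) e; rewrite /F => e'.
  apply Nat2Z.inj; have e2 : (q * Z.of_nat (j1 i) = q * Z.of_nat (j2 i))%Z by lia.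
  exact: (Z.mul_reg_l _ _ q ltac:(lia) e2).
set QB := evalZ Q b.
set f0 := (Int_part Rr - q)%Z.
set z0 := (f0 + (QB - f0) mod q)%Z.
have [hRr1 hRr2] := base_Int_part Rr.
have hz0a : (z0 <= Int_part Rr - 1)%Z by have := Z.mod_pos_bound (QB - f0) q ltac:(lia); rewrite /z0 /f0; lia.
have hz0b : (f0 <= z0)%Z by have := Z.mod_pos_bound (QB - f0) q ltac:(lia); rewrite /z0 /f0; lia.
have hz0R : IZR z0 <= Rr - 1.
  have := IZR_le _ _ hz0a; rewrite minus_IZR; lra.
have hz0R' : Rr - 1 - qR < IZR z0.
  have := IZR_le _ _ hz0b; rewrite /f0 minus_IZR -/qR; lra.
have hQBz : Z.divide q (QB - z0)%Z.
  exists ((QB - f0) / q)%Z; have := Z.div_mod (QB - f0) q ltac:(lia); rewrite /z0; lia.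
set h := fun x => Z.to_nat ((evalZ Q x - z0) / q).
set D := (Int_part (2 * Rr) - z0)%Z.
set M := Z.to_nat (D / q).
have hptZ : forall j, (z0 <= evalZ Q (F j) <= Int_part (2 * Rr))%Z /\ evalZ Q (F j) = (z0 + q * Z.of_nat (h (F j)))%Z.
  move=> j; have [hpa hpb] := hpt j.
  have ha1 : (z0 <= evalZ Q (F j))%Z by apply le_IZR; lra.
  have ha2 : (evalZ Q (F j) <= Int_part (2 * Rr))%Z by apply Int_part_ge; lra.
  split; first by lia.
  have hdiv : Z.divide q (evalZ Q (F j) - z0)%Z.
    have [u hu0] := hQBz.
    have [v hv] : Z.divide q (evalZ Q (F j) - evalZ Q b)%Z.
      by apply evalZ_cong => i; apply Z.mod_divide; [lia | apply hFdiv].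
    exists (v + u)%Z; rewrite -/QB in hv; lia.
  rewrite /h Z2Nat.id; last by apply Z.div_pos; lia.
  have := (proj2 (Z.div_exact (evalZ Q (F j) - z0) q ltac:(lia))) (proj2 (Z.mod_divide _ q ltac:(lia)) hdiv).
  lia.
have hhM : forall x, In x Spts -> (h x <= M)%coq_nat.
  move=> x /hinS [j ->]; have [[ha1 ha2] _] := hptZ j.
  rewrite /h /M; apply Z2Nat.inj_le; try (apply Z.div_pos; lia).
  apply Z.div_le_mono; rewrite /D; lia.
have [jj [hjj hpig]] := pigeon hhM.
set l := filter (fun x => Nat.eqb (h x) jj) Spts.
set lam := (z0 + q * Z.of_nat jj)%Z.
have hinl : forall x, In x l -> (exists j, x = F j) /\ evalZ Q x = lam.
  move=> x /filter_In [/hinS [j ->] /Nat.eqb_eq hx]; split; first by exists j.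
  by rewrite (proj2 (hptZ j)) hx.
have hlpos : (1 <= length l)%coq_nat.
  rewrite hlenS in hpig.
  have : (1 <= expn L n)%coq_nat by apply/leP; rewrite expn_gt0; apply/orP; left; apply/ltP; lia.
  move: hpig; rewrite /l; set y := length _; set E1 := expn L n; nia.
have [x0 hx0] : exists x0, In x0 l by case: (l) hlpos => [|y l'] /=; [lia | exists y; left].
have [[j0 ->] hQx0] := hinl x0 hx0.
have [hq01 hq02] := hpt j0.
rewrite hQx0 in hq01 hq02.
exists lam; split; first lra; split; first lra.
exists l; split; first by apply NoDup_filter.
split.
  move=> x hx; have [[j ->] hQ] := hinl x hx; split => // i.
have hD0 : (0 <= D)%Z.
  have : (z0 <= Int_part (2 * Rr))%Z by apply Int_part_ge; lra.
  rewrite /D; lia.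
have hMR : INR (S M) <= 4 * Rr / qR.
  have hM : INR M = IZR (D / q) by rewrite /M INR_IZR_INZ Z2Nat.id //; apply Z.div_pos; lia.
  have h1 : qR * IZR (D / q) <= IZR D by rewrite /qR -mult_IZR; apply IZR_le; apply Z.mul_div_le; lia.
  have [h2 _] := base_Int_part (2 * Rr).
  have h3 : IZR D <= Rr + 1 + qR by rewrite /D minus_IZR; lra.
  apply (Rmult_le_reg_l qR); first lra.
  have -> : qR * (4 * Rr / qR) = 4 * Rr by field; lra.
  rewrite S_INR hM; lra.
have hlR : INR L ^ n <= INR (S M) * INR (length l).
  rewrite -INR_expn -mult_INR; apply le_INR; rewrite -hlenS; exact hpig.
have hlam0 : 0 < IZR lam by lra.
have hpow : Rpower (INR p) (- (INR J * (INR n - 1))) = / qR ^ (n - 1).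
  have hp0 : 0 < INR p by apply (lt_INR 0); lia.
  rewrite Rpower_Ropp -(minus_INR n 1); last lia.
  rewrite -mult_INR Rpower_pow // pow_mult -hqR //.
have ha1 : 0 <= a - 1 by lra.
have hlamp : Rpower (IZR lam) (a - 1) <= Rpower 2 a / 2 * Rpower Rr (a - 1).
  have h1 : Rpower (IZR lam) (a - 1) <= Rpower (2 * Rr) (a - 1) by apply Rle_Rpower_l => //; lra.
  rewrite -Rpower_mult_distr in h1; try lra.
  have -> : Rpower 2 a = Rpower 2 (a - 1) * 2.
    have -> : a = (a - 1) + 1 by ring.
    rewrite Rpower_plus Rpower_1; [f_equal; f_equal; ring | lra].
  have -> : Rpower 2 (a - 1) * 2 / 2 = Rpower 2 (a - 1) by field.
  exact h1.
have hTn : T ^ n = Rpower (3 / (2 * c)) a * (Rpower Rr (a - 1) * Rr).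
  rewrite /T -Rpower_pow; last by apply exp_pos.
  rewrite Rpower_mult.
  have -> : / INR k * INR n = a by rewrite /a /Rdiv Rmult_comm.
  have -> : X = 3 / (2 * c) * Rr by rewrite /X; field; lra.
  rewrite -Rpower_mult_distr; try lra; last by apply Rdiv_lt_0_compat; lra.
  congr (_ * _).
  have e1 : Rpower Rr a = Rpower Rr ((a - 1) + 1) by f_equal; ring.
  rewrite e1 Rpower_plus Rpower_1 //; lra.
set P := Rpower (3 / (2 * c)) a.
set G := Rpower Rr (a - 1).
set Z2 := Rpower 2 a.
set K := (2 * K0) ^ n.
set Qn := qR ^ (n - 1).
have hP : 0 < P by apply exp_pos.
have hG : 0 < G by apply exp_pos.
have hZ2 : 0 < Z2 by apply exp_pos.
have hK : 0 < K by apply pow_lt; lra.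
have hQn : 0 < Qn by apply pow_lt; lra.
have hqn : qR ^ n = Qn * qR.
  have e : n = ((n - 1) + 1)%coq_nat by lia.
  by rewrite /Qn {1}e pow_add pow_1.
have hC : C = P / (K * 4 * Z2) by [].
have hLHS : C * (Rpower (INR p) (- (INR J * (INR n - 1))) * Rpower (IZR lam) (a - 1))
            <= P * G / (8 * K * Qn).
  rewrite hpow hC.
  have hC0 : 0 <= P / (K * 4 * Z2) * / Qn.
    apply Rmult_le_pos; apply Rlt_le; [apply Rdiv_lt_0_compat => //; nra | by apply Rinv_0_lt_compat].
  rewrite -Rmult_assoc.
  apply: Rle_trans; first by apply Rmult_le_compat_l; [exact hC0 | exact hlamp].
  rewrite -/Z2 -/G; apply Req_le. rewrite -/Qn. field; repeat split; lra.
have hLn : (T / (2 * K0 * qR)) ^ n <= INR L ^ n.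
  apply pow_incr; split.
    apply Rlt_le, Rdiv_lt_0_compat => //; nra.
  have -> : T / (2 * K0 * qR) = z / 2 by rewrite /z; field; lra.
  exact hLz'.
have hTn' : (T / (2 * K0 * qR)) ^ n = P * G * Rr / (K * (Qn * qR)).
  rewrite /Rdiv Rpow_mult_distr pow_inv hTn Rpow_mult_distr hqn -/K -/P -/G; ring.
have hRHS : P * G / (4 * K * Qn) <= INR (length l).
  have hS0 : 0 < INR (S M) by apply (lt_INR 0); lia.
  apply (Rmult_le_reg_l (INR (S M))) => //.
  apply: Rle_trans; last exact hlR.
  rewrite hTn' in hLn; apply: Rle_trans hLn.
  have hq0 : 0 < qR by lra.
  have h1 : INR (S M) * (P * G / (4 * K * Qn)) <= 4 * Rr / qR * (P * G / (4 * K * Qn)).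
    apply Rmult_le_compat_r => //; apply Rlt_le, Rdiv_lt_0_compat; nra.
  apply: Rle_trans h1 _; apply Req_le; field; repeat split; lra.
have : P * G / (8 * K * Qn) <= P * G / (4 * K * Qn).
  apply Rmult_le_compat_l; first nra.
  apply Rinv_le_contravar; nra.
lra.
Qed.
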